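(* Let $g:[0,1]\to[0,\infty)$ be differentiable on $(0,1)$ and suppose that for some $p^*\in(0,1)$, $0<g'(p)\le(1/p-1/p^* )\frac{g(p)}{1-p}$ for $p\in(0,p^* )$ and $g'(p)<0$ for $p\in(p^*,1)$. For integers $r\ge1$ let $u_r(p,n,g)=g(p)^r(1-p)^n(1-(1-p)^n)/p$, let $p^*_r$ be a maximizer of $u_r(\cdot,n,g)$ over $(0,1)$, and let $c(r)=g(p^*_r)/(r-1)$. Then for all $r\ge3$: 1. If either $g(p)/p$ is non-increasing, or $n<1+\frac{4}{(1-p^* )^2}$, then $$c(r)\le0.5\,g\Big(\frac{3}{n+(3/p^* )-1}\Big).$$ 2. If $n\ge1+\frac{4}{(1-p^* )^2}$, then $$c(r)\le\max\Big(0.5\,g\Big(\frac{3}{n+(3/p^* )-1}\Big),\ \frac{1}{r_4-1}\,g\Big(\frac{r_4}{n+(r_4/p^* )-1}\Big)\Big),$$ where $r_4=0.5(n-1)(1-p^* )\Big(1+\sqrt{1-\frac{4}{(n-1)(1-p^* )^2}}\Big)$. *)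

(* Defs.v *)
From Stdlib Require Export Reals.
Open Scope R_scope.

Definition u (r n : nat) (g : R -> R) (p : R) : R :=
  g p ^ r * (1 - p) ^ n * (1 - (1 - p) ^ n) / p.

Definition r4 (n : nat) (ps : R) : R :=
  (1/2) * (INR n - 1) * (1 - ps) *
  (1 + sqrt (1 - 4 / ((INR n - 1) * (1 - ps) ^ 2))).

(* Main.v *)
Require Import Defs.
From Stdlib Require Import Reals Lra Lia Psatz.
From Coquelicot Require Import Coquelicot.
Open Scope R_scope.

Lemma key_ineq x : 0 <= x <= 1 -> forall k, INR (S k) * (1-x) * x^k <= 1 - x^(S k).
Proof.
  intros Hx k. induction k.
  - simpl. lra.
  - rewrite S_INR.
    assert (0 <= x^k) by (apply pow_le; lra).
    assert (0 <= INR (S k)) by apply pos_INR.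
    change (x^(S k)) with (x * x^k) in *. change (x^(S (S k))) with (x * (x * x^k)).
    assert (0 <= INR (S k) * (1-x) * (x^k - x * x^k)) by (apply Rmult_le_pos; [apply Rmult_le_pos; lra | nra]).
    nra.
Qed.

Lemma u_deriv (g g' : R -> R) r n x :
  0 < x < 1 -> derivable_pt_lim g x (g' x) ->
  derivable_pt_lim (u r n g) x
   (((g' x * (INR r * g x ^ Init.Nat.pred r) * (1 - x) ^ n + g x ^ r * (- (INR n * (1 - x) ^ Init.Nat.pred n))) *
  (1 - (1 - x) ^ n) +
  g x ^ r * (1 - x) ^ n * (INR n * (1 - x) ^ Init.Nat.pred n)) *
 / x - g x ^ r * (1 - x) ^ n * (1 - (1 - x) ^ n) * / (x * x)).
Proof.
  intros Hx Hd. apply is_derive_Reals. unfold u.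
  assert (E: Derive g x = g' x). { apply is_derive_unique. apply is_derive_Reals; auto. }
  auto_derive.
  - split; [exists (g' x); apply is_derive_Reals; auto | split; [lra|auto]].
  - replace (Derive (fun x0 : R => g x0) x) with (g' x) by (rewrite <- E; reflexivity). unfold Rminus. ring.
Qed.

Section S.
Variables (g g' : R -> R) (ps : R).
Hypothesis Hg_deriv : forall p, 0 < p < 1 -> derivable_pt_lim g p (g' p).
Hypothesis Hps : 0 < ps < 1.
Hypothesis Hinc_pos : forall p, 0 < p < ps -> 0 < g' p.
Hypothesis Hdec : forall p, ps < p < 1 -> g' p < 0.

Lemma g_incr a b : 0 < a -> a < b -> b <= ps -> g a < g b.
Proof.
  intros Ha Hab Hb.
  destruct (MVT_cor2 g g' a b Hab) as [c [Hc1 Hc2]].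
  { intros c Hc. apply Hg_deriv. lra. }
  assert (0 < g' c) by (apply Hinc_pos; lra).
  assert (0 < g' c * (b - a)) by (apply Rmult_lt_0_compat; lra). lra.
Qed.

Lemma g_decr a b : ps <= a -> a < b -> b < 1 -> g b < g a.
Proof.
  intros Ha Hab Hb.
  destruct (MVT_cor2 g g' a b Hab) as [c [Hc1 Hc2]].
  { intros c Hc. apply Hg_deriv. lra. }
  assert (g' c < 0) by (apply Hdec; lra).
  assert (0 < - g' c * (b - a)) by (apply Rmult_lt_0_compat; lra). lra.
Qed.

Lemma g'_ps : g' ps <= 0.
Proof.
  assert (Hd : derivable_pt_lim g ps (g' ps)) by (apply Hg_deriv; lra).
  assert (E := deriv_maximum g 0 1 ps (exist _ (g' ps) Hd) ltac:(lra) ltac:(lra)).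
  simpl in E. rewrite E; [lra|].
  intros x H0 H1.
  destruct (Rtotal_order x ps) as [Hl|[He|Hg]].
  - left. apply g_incr; lra.
  - subst; lra.
  - left. apply g_decr; lra.
Qed.

Hypothesis Hinc_bd : forall p, 0 < p < ps -> g' p <= (1 / p - 1 / ps) * (g p / (1 - p)).
Hypothesis Hg_nonneg : forall p, 0 <= p <= 1 -> 0 <= g p.
Variable N : R.
Hypothesis HN : 1 <= N.

Definition qf t := t / (N + t / ps - 1).

Lemma qf_range t : 1 <= t -> 0 < qf t <= ps /\ qf t < 1.
Proof.
  intros Ht. unfold qf.
  assert (1 < 1/ps). { apply (Rmult_lt_reg_r ps); [lra|]. field_simplify; lra. }
  assert (t < t/ps). { unfold Rdiv. replace (t * /ps) with (t * (1/ps)) by (unfold Rdiv; ring). nra. }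
  assert (0 < t/ps) by (apply Rdiv_lt_0_compat; lra).
  set (D := N + t/ps - 1) in *.
  assert (HD : t < D) by (unfold D; lra).
  split; [split|].
  - apply Rdiv_lt_0_compat; lra.
  - apply (Rmult_le_reg_r D); [lra|]. field_simplify; [|lra].
    unfold D. replace ((N + t/ps - 1) * ps) with ((N-1)*ps + t) by (field; lra). nra.
  - apply (Rmult_lt_reg_r D); [lra|]. field_simplify; lra.
Qed.

Definition Hf t := g (qf t) / (t - 1).

Lemma Hf_deriv t : 1 < t ->
  derivable_pt_lim Hf t
   ((g' (qf t) * ((N - 1) / (N + t/ps - 1)^2) * (t - 1) - g (qf t)) / (t - 1)^2).
Proof.
  intros Ht. destruct (qf_range t ltac:(lra)) as [[Hq1 Hq2] Hq3].
  assert (Hd := Hg_deriv (qf t) ltac:(lra)).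
  assert (E: Derive g (qf t) = g' (qf t)). { apply is_derive_unique. apply is_derive_Reals; auto. }
  assert (0 < t/ps) by (apply Rdiv_lt_0_compat; lra).
  apply is_derive_Reals. unfold Hf, qf in *.
  auto_derive.
  - repeat split; try lra. exists (g' (t / (N + t / ps - 1))); apply is_derive_Reals; auto.
  - replace (Derive (fun x0 : R => g x0) (t * / (N + t * / ps + - (1)))) with (g' (t / (N + t / ps - 1))) by (rewrite <- E; reflexivity).
    assert (0 < N + t/ps - 1) by lra.
    change (t * / (N + t * / ps + - (1))) with (t / (N + t / ps - 1)).
    field. repeat split; nra.
Qed.

Lemma Hf_num t : 1 < t ->
  g' (qf t) * ((N - 1) / (N + t/ps - 1)^2) * (t - 1) - g (qf t) <= 0.
Proof.
  intros Ht. destruct (qf_range t ltac:(lra)) as [[Hq1 Hq2] Hq3].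
  assert (Hg0 : 0 <= g (qf t)) by (apply Hg_nonneg; lra).
  assert (0 < t/ps) by (apply Rdiv_lt_0_compat; lra).
  assert (1 < 1/ps). { apply (Rmult_lt_reg_r ps); [lra|]. field_simplify; lra. }
  assert (t < t/ps). { unfold Rdiv. replace (t * /ps) with (t * (1/ps)) by (unfold Rdiv; ring). nra. }
  destruct (Req_dec N 1) as [HN1|HN1].
  - rewrite HN1. unfold Rdiv at 1. rewrite Rminus_diag, Rmult_0_l, Rmult_0_r, Rmult_0_l. lra.
  - assert (0 < N*ps + t - ps) by nra.
    set (D := N + t/ps - 1) in *.
    assert (HD : t < D) by (unfold D; lra).
    assert (HDN : N - 1 < D) by (unfold D; lra).
    assert (HDt : N - 1 < D - t) by (unfold D; lra).
    assert (Hq2' : qf t < ps).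
    { unfold qf. fold D. apply (Rmult_lt_reg_r D); [lra|]. field_simplify; [|lra].
      unfold D. replace ((N + t/ps - 1) * ps) with ((N-1)*ps + t) by (field; lra). nra. }
    assert (Hb := Hinc_bd (qf t) ltac:(lra)).
    assert (E1 : 1 / qf t - 1 / ps = (N - 1) / t) by (unfold qf; fold D; unfold D; field; repeat split; lra).
    assert (E2 : 1 - qf t = (D - t) / D) by (unfold qf; fold D; field; lra).
    rewrite E1, E2 in Hb.
    set (G := g (qf t)) in *. set (G' := g' (qf t)) in *.
    assert (Hc : 0 <= (N - 1) / D^2 * (t - 1)).
    { apply Rmult_le_pos; [apply Rdiv_le_0_compat; [lra| apply pow_lt; lra]|lra]. }
    assert (HH1 : G' * ((N - 1) / D^2) * (t - 1) <= (N - 1) / t * (G / ((D - t) / D)) * ((N - 1) / D^2 * (t - 1))).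
    { rewrite Rmult_assoc. apply Rmult_le_compat_r; auto. }
    assert (E3 : (N - 1) / t * (G / ((D - t) / D)) * ((N - 1) / D^2 * (t - 1))
                 = G * ((N-1)^2 * (t-1) / (t * D * (D - t)))) by (field; repeat split; lra).
    assert (Hr : (N-1)^2 * (t-1) / (t * D * (D - t)) <= 1).
    { assert (0 < t * D * (D - t)) by (apply Rmult_lt_0_compat; [apply Rmult_lt_0_compat|]; lra).
      apply (Rmult_le_reg_r (t * D * (D - t))); auto.
      field_simplify; [|lra].
      assert (0 <= N - 1) by lra.
      assert ((N-1)*(N-1) <= D * (D - t)) by (apply Rmult_le_compat; lra).
      nra. }
    assert (G * ((N-1)^2 * (t-1) / (t * D * (D - t))) <= G * 1) by (apply Rmult_le_compat_l; auto).
    lra.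
Qed.

Lemma Hf_decr T : 3 <= T -> Hf T <= Hf 3.
Proof.
  intros HT. destruct (Req_dec T 3) as [->|HT3]; [lra|].
  destruct (MVT_cor2 Hf (fun t => (g' (qf t) * ((N - 1) / (N + t/ps - 1)^2) * (t - 1) - g (qf t)) / (t - 1)^2) 3 T ltac:(lra)) as [c [Hc1 Hc2]].
  { intros c Hc. apply Hf_deriv. lra. }
  assert (Hn := Hf_num c ltac:(lra)).
  assert (0 < (c - 1)^2) by (apply pow_lt; lra).
  assert (((g' (qf c) * ((N - 1) / (N + c / ps - 1) ^ 2) * (c - 1) - g (qf c)) / (c - 1) ^ 2) <= 0).
  { assert (0 < / (c-1)^2) by (apply Rinv_0_lt_compat; auto). unfold Rdiv. nra. }
  nra.
Qed.

Lemma A_pos m q : 0 < q < 1 -> 0 < (1 - q)^(S m) * (1 - (1 - q)^(S m)) / q.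
Proof.
  intros Hq.
  assert (K := key_ineq (1-q) ltac:(lra) m).
  assert (0 < (1-q)^m) by (apply pow_lt; lra).
  assert (0 < INR (S m)) by (apply lt_0_INR; lia).
  assert (0 < INR (S m) * (1 - (1 - q)) * (1-q)^m) by (apply Rmult_lt_0_compat; [apply Rmult_lt_0_compat|]; lra).
  assert (0 < (1-q)^(S m)) by (apply pow_lt; lra).
  apply Rdiv_lt_0_compat; [apply Rmult_lt_0_compat|]; lra.
Qed.

Lemma step1 (r n : nat) (pr : R) : (1<=n)%nat -> (3<=r)%nat -> 0<pr<1 ->
  (forall q, 0<q<1 -> u r n g q <= u r n g pr) -> N = INR n -> g pr <= g (qf (INR r)).
Proof.
  intros Hn Hr Hpr Hmax HNn.
  destruct r as [|r1]; [lia|]. destruct n as [|n1]; [lia|].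
  assert (HG : 0 < g pr).
  { destruct (Hg_nonneg pr ltac:(lra)) as [H|H]; auto. exfalso.
    assert (Hh := Hmax (ps/2) ltac:(lra)).
    assert (0 < g (ps/2)).
    { assert (0 <= g (ps/4)) by (apply Hg_nonneg; lra).
      assert (g (ps/4) < g (ps/2)) by (apply g_incr; lra). lra. }
    assert (0 < g (ps/2) ^ (S r1)) by (apply pow_lt; auto).
    assert (A := A_pos n1 (ps/2) ltac:(lra)).
    unfold u in Hh. rewrite <- H in Hh.
    replace (0 ^ S r1 * (1 - pr) ^ S n1 * (1 - (1 - pr) ^ S n1) / pr) with 0 in Hh
      by (simpl; unfold Rdiv; ring).
    assert (0 < g (ps/2) ^ S r1 * ((1 - ps/2) ^ S n1 * (1 - (1 - ps/2) ^ S n1) / (ps/2)))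
      by (apply Rmult_lt_0_compat; auto).
    unfold Rdiv in *. nra. }
  assert (Hd := u_deriv g g' (S r1) (S n1) pr Hpr (Hg_deriv pr Hpr)).
  assert (E := deriv_maximum _ 0 1 pr (exist _ _ Hd) ltac:(lra) ltac:(lra)
                 (fun q h1 h2 => Hmax q (conj h1 h2))).
  unfold derive_pt in E; cbn [proj1_sig Init.Nat.pred] in E.
  set (G := g pr) in *. set (G' := g' pr) in *.
  set (y := 1 - pr) in *. set (P := y ^ n1) in *.
  change (y ^ S n1) with (y * P) in E.
  change (G ^ S r1) with (G * G ^ r1) in E.
  assert (HGr : 0 < G ^ r1) by (apply pow_lt; auto).
  set (R := INR (S r1)) in *. set (Nn := INR (S n1)) in *.
  set (K := (R * G' * y * P * (1 - y*P) - G * Nn * P * (1 - y*P) + G * y * Nn * P * P) * pr - G * y * P * (1 - y*P)).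
  assert (EK : K = 0).
  { set (Dv := ((G' * (R * G ^ r1) * (y * P) + G * G ^ r1 * - (Nn * P)) * (1 - y * P) +
       G * G ^ r1 * (y * P) * (Nn * P)) * / pr - G * G ^ r1 * (y * P) * (1 - y * P) * / (pr * pr)) in *.
    assert (EE : K = Dv * (pr * pr) / G ^ r1) by (unfold K, Dv; field; split; lra).
    rewrite EE. fold Dv in E. rewrite E. unfold Rdiv; ring. }
  assert (Kin := key_ineq y ltac:(unfold y; lra) n1). fold Nn P in Kin.
  change (y ^ S n1) with (y * P) in Kin.
  replace (1 - y) with pr in Kin by (unfold y; ring).
  assert (HP : 0 < P) by (apply pow_lt; unfold y; lra).
  assert (HNnp : 0 < Nn) by (apply lt_0_INR; lia).
  assert (HR : 3 <= R) by (unfold R; replace 3 with (INR 3) by (simpl; ring); apply le_INR; lia).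
  assert (Hy : 0 < y) by (unfold y; lra).
  assert (Hpos : 0 < P * (1 - y*P) * pr).
  { assert (0 < Nn * pr * P) by (apply Rmult_lt_0_compat; [apply Rmult_lt_0_compat|]; lra).
    apply Rmult_lt_0_compat; [apply Rmult_lt_0_compat|]; lra. }
  assert (Hkey : G * Nn <= R * G' * y).
  { assert (HZ : G * y * P * (pr * Nn * P - (1 - y*P)) <= 0).
    { assert (0 < G * y * P) by (apply Rmult_lt_0_compat; [apply Rmult_lt_0_compat|]; lra).
      assert (pr * Nn * P - (1 - y*P) <= 0) by lra. nra. }
    assert (Eq : (R*G'*y - G*Nn)*(P*(1-y*P)*pr) = K - G*y*P*(pr*Nn*P - (1-y*P))) by (unfold K; ring).
    rewrite EK in Eq.
    destruct (Rle_or_lt (G * Nn) (R * G' * y)) as [|Hlt]; auto.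
    assert ((R*G'*y - G*Nn)*(P*(1-y*P)*pr) < 0) by (apply Rmult_neg_pos; lra).
    lra. }
  destruct (Rlt_or_le pr ps) as [Hlt|Hge].
  - assert (Hb := Hinc_bd pr (conj (proj1 Hpr) Hlt)). fold G G' y in Hb.
    assert (HRy : 0 < R * y) by (apply Rmult_lt_0_compat; lra).
    assert (H1 : R * y * G' <= R * y * ((1 / pr - 1 / ps) * (G / y))) by (apply Rmult_le_compat_l; lra).
    replace (R * y * ((1 / pr - 1 / ps) * (G / y))) with (G * (R * (1/pr - 1/ps))) in H1 by (field; lra).
    assert (H2 : Nn <= R * (1/pr - 1/ps)).
    { apply (Rmult_le_reg_l G); auto. lra. }
    assert (H3 : pr * Nn <= R - R * pr / ps).
    { replace (R - R * pr / ps) with (pr * (R * (1/pr - 1/ps))) by (field; lra).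
      apply Rmult_le_compat_l; lra. }
    destruct (qf_range R ltac:(lra)) as [[Hq1 Hq2] Hq3].
    assert (HD : 0 < N + R/ps - 1).
    { assert (0 < R/ps) by (apply Rdiv_lt_0_compat; lra). lra. }
    assert (Hle : pr <= qf R).
    { unfold qf. apply (Rmult_le_reg_r (N + R/ps - 1)); auto.
      assert (0 < N*ps + R - ps) by nra.
      replace (R / (N + R / ps - 1) * (N + R / ps - 1)) with R by (field; repeat split; nra).
      rewrite HNn. fold Nn.
      replace (pr * (Nn + R / ps - 1)) with (pr * Nn + R * pr / ps - pr) by (field; lra).
      lra. }
    destruct (Req_dec pr (qf R)) as [He|Hne].
    + rewrite <- He. apply Rle_refl.
    + left. apply g_incr; lra.
  - exfalso.
    assert (HG' : G' <= 0).
    { destruct (Req_dec pr ps) as [He|Hne].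
      + unfold G'. rewrite He. apply g'_ps.
      + left. apply Hdec. lra. }
    assert (R * y * G' <= 0).
    { assert (0 <= R * y) by (apply Rmult_le_pos; lra). nra. }
    assert (0 < G * Nn) by (apply Rmult_lt_0_compat; lra).
    lra.
Qed.
End S.

Theorem lemma8 (g g' : R -> R) (ps : R) (n r : nat) (pr : R)
  (Hg_nonneg : forall p, 0 <= p <= 1 -> 0 <= g p)
  (Hg_deriv : forall p, 0 < p < 1 -> derivable_pt_lim g p (g' p))
  (Hps : 0 < ps < 1)
  (Hinc : forall p, 0 < p < ps ->
            0 < g' p /\ g' p <= (1 / p - 1 / ps) * (g p / (1 - p)))
  (Hdec : forall p, ps < p < 1 -> g' p < 0)
  (Hn : (1 <= n)%nat)
  (Hr : (3 <= r)%nat)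
  (Hpr : 0 < pr < 1)
  (Hmax : forall q, 0 < q < 1 -> u r n g q <= u r n g pr) :
  ( ((forall p q, 0 < p -> p <= q -> q <= 1 -> g q / q <= g p / p)
      \/ INR n < 1 + 4 / (1 - ps) ^ 2) ->
    g pr / (INR r - 1) <= (1/2) * g (3 / (INR n + 3 / ps - 1)) )
  /\
  ( INR n >= 1 + 4 / (1 - ps) ^ 2 ->
    g pr / (INR r - 1) <=
      Rmax ((1/2) * g (3 / (INR n + 3 / ps - 1)))
           (1 / (r4 n ps - 1) * g (r4 n ps / (INR n + r4 n ps / ps - 1))) ).
Proof.
  assert (Hinc_pos : forall p, 0 < p < ps -> 0 < g' p) by (intros p Hp; apply (Hinc p Hp)).
  assert (Hinc_bd : forall p, 0 < p < ps -> g' p <= (1 / p - 1 / ps) * (g p / (1 - p)))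
    by (intros p Hp; apply (Hinc p Hp)).
  assert (HN : 1 <= INR n) by (replace 1 with (INR 1) by reflexivity; apply le_INR; lia).
  assert (HR : 3 <= INR r) by (replace 3 with (INR 3) by (simpl; ring); apply le_INR; lia).
  assert (S1 := step1 g g' ps Hg_deriv Hps Hinc_pos Hdec Hinc_bd Hg_nonneg (INR n) HN r n pr Hn Hr Hpr Hmax eq_refl).
  assert (S2 := Hf_decr g g' ps Hg_deriv Hps Hinc_bd Hg_nonneg (INR n) HN (INR r) HR).
  unfold Hf, qf in S1, S2.
  assert (Main : g pr / (INR r - 1) <= (1/2) * g (3 / (INR n + 3 / ps - 1))).
  { assert (g pr / (INR r - 1) <= g (INR r / (INR n + INR r / ps - 1)) / (INR r - 1)).
    { unfold Rdiv. apply Rmult_le_compat_r; auto. apply Rlt_le, Rinv_0_lt_compat. lra. }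
    replace ((1/2) * g (3 / (INR n + 3 / ps - 1))) with (g (3 / (INR n + 3 / ps - 1)) / (3 - 1)) by field.
    lra. }
  split; intros _; auto.
  eapply Rle_trans; [exact Main | apply Rmax_l].
Qed.
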